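(* Let $a_0,a_1,a_2\ge0$ with $a_1\ge a_2$, and let $\Delta t\in(0,3/(4a_0)]$ (any $\Delta t>0$ if $a_0=0$). Let $\{x_n\}_{n\ge0}$, $\{y_n\}_{n\ge1}$, $\{z_n\}_{n\ge2}$, $\{b_n\}_{n\ge2}$ be non-negative sequences such that $$\frac1{\Delta t}\Big(\tfrac32x_n-2x_{n-1}+\tfrac12x_{n-2}+y_n-y_{n-1}\Big)+z_n\le a_0x_n+a_1x_{n-1}+a_2x_{n-2}+b_n\quad\forall n\ge2.$$ Then, with $a_*:=a_0+a_1+a_2$, for all $n\ge2$, $$x_n+\tfrac23y_n+\tfrac23\Delta t\sum_{i=2}^nz_i\le\big(\exp(2a_*n\Delta t)+1\big)\Big(x_0+\tfrac32x_1+y_1+\Delta t\sum_{i=2}^nb_i\Big).$$ *)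

(* Defs.v *)
From Stdlib Require Import Reals.
Open Scope R_scope.

(* sum_range m n f = f m + f (m+1) + ... + f n  (0 if n < m). *)
Fixpoint sum_upto (m : nat) (f : nat -> R) (n : nat) : R :=
  match n with
  | O => if Nat.leb m 0 then f 0%nat else 0
  | S k => sum_upto m f k + (if Nat.leb m (S k) then f (S k) else 0)
  end.

Definition sum_range (m n : nat) (f : nat -> R) : R := sum_upto m f n.

(* Main.v *)
Require Import Defs.
From Stdlib Require Import Reals Lra Psatz Lia.
Open Scope R_scope.

Definition Af u v r := (r-1)*((3/2-u)*r - 1/2) - 2*v*r.
Definition gf u v r := (3/2-u)*r^2 - (1/2+2*v)*r - u - 2*v.
Definition Lf v := (1+v/2)^4.

Lemma Lf_ge v : 0 <= v -> 1 + 2*v <= Lf v.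
Proof. intros; unfold Lf. assert (0 <= v^2) by nra. assert (0<=v^3) by (simpl; nra).
 assert (0<= v^4) by (simpl; nra). nra. Qed.

Lemma A_L_small v : 0 <= v -> v <= 3/4 -> 0 <= Af v v (Lf v).
Proof. intros.
assert (E: Af v v (Lf v) = v^2 * (3/2 + v - 17/16*v^2 - 29/16*v^3 - 35/32*v^4 - 11/32*v^5 - 29/512*v^6 - 1/256*v^7)).
{ unfold Af, Lf. field. }
rewrite E. apply Rmult_le_pos. nra.
assert (h2: v^2 <= 9/16) by nra.
assert (h3: v^3 <= 3/4*v^2) by (simpl; nra).
assert (h4: v^4 <= 3/4*v^3) by (simpl; nra).
assert (h5: v^5 <= 3/4*v^4) by (simpl; nra).
assert (h6: v^6 <= 3/4*v^5) by (simpl; nra).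
assert (h7: v^7 <= 3/4*v^6) by (simpl; nra).
assert (0 <= v^3) by (apply pow_le; lra).
assert (0 <= v^4) by (apply pow_le; lra).
assert (0 <= v^5) by (apply pow_le; lra).
assert (0 <= v^6) by (apply pow_le; lra).
assert (0 <= v^7) by (apply pow_le; lra).
nra. Qed.

Lemma g_L_small v : 0 <= v -> v <= 3/4 -> 0 <= gf v v (Lf v).
Proof. intros.
assert (E: gf v v (Lf v) = 1 - v + 7/4*v^2 + 1/4*v^3 - 47/32*v^4 - 15/8*v^5 - 35/32*v^6 - 11/32*v^7 - 29/512*v^8 - 1/256*v^9).
{ unfold gf, Lf. field. }
rewrite E.
assert (h2: v^2 <= 9/16) by nra.
assert (h3: v^3 <= 3/4*v^2) by (simpl; nra).
assert (h4: v^4 <= 3/4*v^3) by (simpl; nra).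
assert (h5: v^5 <= 3/4*v^4) by (simpl; nra).
assert (h6: v^6 <= 3/4*v^5) by (simpl; nra).
assert (h7: v^7 <= 3/4*v^6) by (simpl; nra).
assert (h8: v^8 <= 3/4*v^7) by (simpl; nra).
assert (h9: v^9 <= 3/4*v^8) by (simpl; nra).
assert (0 <= v^3) by (apply pow_le; lra).
assert (0 <= v^4) by (apply pow_le; lra).
assert (0 <= v^5) by (apply pow_le; lra).
assert (0 <= v^6) by (apply pow_le; lra).
assert (0 <= v^7) by (apply pow_le; lra).
assert (0 <= v^8) by (apply pow_le; lra).
assert (0 <= v^9) by (apply pow_le; lra).
nra. Qed.

Lemma A_L_big v : 3/4 <= v -> 0 <= Af (3/4) v (Lf v).
Proof. intros. set (w := v - 3/4). assert (Hw: 0 <= w) by (unfold w; lra).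
assert (E: Af (3/4) v (Lf v) = (16966179/67108864)*w^0 + (13484361/2097152)*w^1 + (18121565/1048576)*w^2 + (2390839/131072)*w^3 + (1334553/131072)*w^4 + (26927/8192)*w^5 + (2541/4096)*w^6 + (33/512)*w^7 + (3/1024)*w^8).
{ unfold w, Af, Lf. field. }
rewrite E.
assert (0 <= w^1) by (apply pow_le; lra).
assert (0 <= w^2) by (apply pow_le; lra).
assert (0 <= w^3) by (apply pow_le; lra).
assert (0 <= w^4) by (apply pow_le; lra).
assert (0 <= w^5) by (apply pow_le; lra).
assert (0 <= w^6) by (apply pow_le; lra).
assert (0 <= w^7) by (apply pow_le; lra).
assert (0 <= w^8) by (apply pow_le; lra).
simpl (w^0). lra. Qed.

Lemma g_L_big v : 3/4 <= v -> 0 <= gf (3/4) v (Lf v).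
Proof. intros. set (w := v - 3/4). assert (Hw: 0 <= w) by (unfold w; lra).
assert (E: gf (3/4) v (Lf v) = (12325411/67108864)*w^0 + (17467721/2097152)*w^1 + (20351837/1048576)*w^2 + (2458423/131072)*w^3 + (1340697/131072)*w^4 + (26927/8192)*w^5 + (2541/4096)*w^6 + (33/512)*w^7 + (3/1024)*w^8).
{ unfold w, gf, Lf. field. }
rewrite E.
assert (0 <= w^1) by (apply pow_le; lra).
assert (0 <= w^2) by (apply pow_le; lra).
assert (0 <= w^3) by (apply pow_le; lra).
assert (0 <= w^4) by (apply pow_le; lra).
assert (0 <= w^5) by (apply pow_le; lra).
assert (0 <= w^6) by (apply pow_le; lra).
assert (0 <= w^7) by (apply pow_le; lra).
assert (0 <= w^8) by (apply pow_le; lra).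
simpl (w^0). lra. Qed.

Lemma A_L u v : 0 <= u -> u <= v -> u <= 3/4 -> 0 <= Af u v (Lf v).
Proof. intros. assert (HL := Lf_ge v ltac:(lra)).
assert (Hq: 0 <= Lf v * Lf v - Lf v) by nra.
destruct (Rle_dec v (3/4)).
- assert (E: Af u v (Lf v) = Af v v (Lf v) + (v-u)*(Lf v * Lf v - Lf v)) by (unfold Af; field).
  rewrite E. pose proof (A_L_small v ltac:(lra) r). nra.
- assert (E: Af u v (Lf v) = Af (3/4) v (Lf v) + (3/4-u)*(Lf v * Lf v - Lf v)) by (unfold Af; field).
  rewrite E. pose proof (A_L_big v ltac:(lra)). nra.
Qed.

Lemma g_L u v : 0 <= u -> u <= v -> u <= 3/4 -> 0 <= gf u v (Lf v).
Proof. intros. assert (HL := Lf_ge v ltac:(lra)).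
assert (Hq: 0 <= Lf v * Lf v + 1) by nra.
destruct (Rle_dec v (3/4)).
- assert (E: gf u v (Lf v) = gf v v (Lf v) + (v-u)*(Lf v * Lf v + 1)) by (unfold gf; field).
  rewrite E. pose proof (g_L_small v ltac:(lra) r). nra.
- assert (E: gf u v (Lf v) = gf (3/4) v (Lf v) + (3/4-u)*(Lf v * Lf v + 1)) by (unfold gf; field).
  rewrite E. pose proof (g_L_big v ltac:(lra)). nra.
Qed.

Lemma A_r u v r : 0 <= u -> u <= v -> u <= 3/4 -> Lf v <= r -> 0 <= Af u v r.
Proof. intros. assert (HL := Lf_ge v ltac:(lra)). pose proof (A_L u v H H0 H1).
assert (E: Af u v r = Af u v (Lf v) + (r - Lf v)*((3/2-u)*(r+Lf v) - (2-u+2*v))) by (unfold Af; field).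
rewrite E. assert (0 <= (3/2-u)*(r+Lf v) - (2-u+2*v)) by nra. nra. Qed.

Lemma g_r u v r : 0 <= u -> u <= v -> u <= 3/4 -> Lf v <= r -> 0 <= gf u v r.
Proof. intros. assert (HL := Lf_ge v ltac:(lra)). pose proof (g_L u v H H0 H1).
assert (E: gf u v r = gf u v (Lf v) + (r - Lf v)*((3/2-u)*(r+Lf v) - (1/2+2*v))) by (unfold gf; field).
rewrite E. assert (0 <= (3/2-u)*(r+Lf v) - (1/2+2*v)) by nra. nra. Qed.

Lemma key u v r X G : 0 <= u -> u <= v -> u <= 3/4 -> Lf v <= r -> r <= X -> 0 <= G ->
  (r-1)*G = r*X - 1 ->
  (X+1)/2 + 1 + 2*v*G <= (3/2-u)*(r*X+1).
Proof. intros. assert (HL := Lf_ge v ltac:(lra)).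
destruct (Req_dec v 0) as [Hv|Hv].
- subst. assert (u = 0) by lra. subst. nra.
- assert (Hr: 1 < r) by lra.
  pose proof (A_r u v r H H0 H1 H2). pose proof (g_r u v r H H0 H1 H2).
  unfold Af, gf in *.
  assert (F: 0 <= (r-1)*((3/2-u)*(r*X+1) - ((X+1)/2 + 1 + 2*v*G))).
  { assert (E: (r-1)*((3/2-u)*(r*X+1) - ((X+1)/2 + 1 + 2*v*G)) =
       ((r-1)*((3/2-u)*r - 1/2) - 2*v*r)*(X-r) + (r-1)*((3/2-u)*r^2 - (1/2+2*v)*r - u - 2*v)).
    { replace ((r-1)*((3/2-u)*(r*X+1) - ((X+1)/2 + 1 + 2*v*G))) with
        ((r-1)*((3/2-u)*(r*X+1) - ((X+1)/2+1)) - 2*v*((r-1)*G)) by field.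
      rewrite H5. field. }
    rewrite E. apply Rplus_le_le_0_compat; apply Rmult_le_pos; lra. }
  nra.
Qed.

Fixpoint psum (f : nat -> R) (k : nat) : R :=
  match k with O => 0 | S j => psum f j + f j end.

Lemma sr_1 f : sum_range 2 1 f = 0.
Proof. unfold sum_range; simpl. ring. Qed.

Lemma sr_S f m : sum_range 2 (S (S m)) f = sum_range 2 (S m) f + f (S (S m)).
Proof. unfold sum_range. reflexivity. Qed.

Lemma sr_nonneg f k : (forall i, (2 <= i)%nat -> 0 <= f i) -> 0 <= sum_range 2 k f.
Proof. intros Hf. unfold sum_range. induction k as [|k IH]; cbn [sum_upto].
- simpl. lra.
- destruct (Nat.leb 2 (S k)) eqn:E.
  + apply Nat.leb_le in E. specialize (Hf _ E). lra.
  + lra.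
Qed.

Lemma sr_mono f k N : (forall i, (2 <= i)%nat -> 0 <= f i) -> (k <= N)%nat ->
  sum_range 2 k f <= sum_range 2 N f.
Proof. intros Hf HkN. induction HkN.
- lra.
- unfold sum_range in *; cbn [sum_upto].
  destruct (Nat.leb 2 (S m)) eqn:E.
  + apply Nat.leb_le in E. specialize (Hf _ E). lra.
  + lra.
Qed.

Lemma exp_INR n c : exp (INR n * c) = exp c ^ n.
Proof. induction n as [|n IH].
- simpl. rewrite Rmult_0_l. apply exp_0.
- rewrite S_INR. replace ((INR n + 1) * c) with (INR n * c + c) by ring.
  rewrite exp_plus, IH. simpl. ring.
Qed.

Lemma geom r k : (r - 1) * psum (fun i => r ^ i) k = r ^ k - 1.
Proof. induction k as [|k IH]; simpl. ring.
  replace ((r - 1) * (psum (fun i => r ^ i) k + r ^ k)) with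
     ((r - 1) * psum (fun i => r ^ i) k + (r-1) * r^k) by ring.
  rewrite IH. ring. Qed.

Lemma geom_ge r k : 1 <= r -> INR k <= psum (fun i => r ^ i) k.
Proof. intro Hr. induction k as [|k IH]; cbn [psum]. simpl; lra.
  rewrite S_INR. assert (1 <= r ^ k) by (apply pow_R1_Rle; lra). lra. Qed.

Lemma psum_le f g k : (forall i, (i < k)%nat -> f i <= g i) -> psum f k <= psum g k.
Proof. induction k as [|k IH]; intros H; simpl. lra.
  assert (H1 : psum f k <= psum g k) by (apply IH; intros; apply H; lia).
  specialize (H k ltac:(lia)). lra. Qed.

Lemma psum_HC r C k : psum (fun i => (r ^ i + 1) * C) k = (psum (fun i => r ^ i) k + INR k) * C.
Proof. induction k as [|k IH]; cbn [psum]. simpl; ring. rewrite IH, S_INR. ring. Qed.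

Theorem lemma1 (a0 a1 a2 dt : R) (x y z b : nat -> R) :
  0 <= a0 -> 0 <= a1 -> 0 <= a2 -> a2 <= a1 ->
  0 < dt -> (a0 = 0 \/ dt <= 3 / (4 * a0)) ->
  (forall n : nat, 0 <= x n) ->
  (forall n : nat, (1 <= n)%nat -> 0 <= y n) ->
  (forall n : nat, (2 <= n)%nat -> 0 <= z n) ->
  (forall n : nat, (2 <= n)%nat -> 0 <= b n) ->
  (forall n : nat, (2 <= n)%nat ->
     / dt * (3 / 2 * x n - 2 * x (n - 1)%nat + 1 / 2 * x (n - 2)%nat
             + y n - y (n - 1)%nat) + z n
     <= a0 * x n + a1 * x (n - 1)%nat + a2 * x (n - 2)%nat + b n) ->
  forall n : nat, (2 <= n)%nat ->
    x n + 2 / 3 * y n + 2 / 3 * dt * sum_range 2 n z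
    <= (exp (2 * (a0 + a1 + a2) * INR n * dt) + 1)
       * (x 0%nat + 3 / 2 * x 1%nat + y 1%nat + dt * sum_range 2 n b).
Proof.
  intros Ha0 Ha1 Ha2 Ha12 Hdt Hdt0 Hx Hy Hz Hb Hrec N HN.
  set (T := fun i : nat => a0 * x i + a1 * x (i - 1)%nat + a2 * x (i - 2)%nat).
  assert (Hsum : forall m : nat,
    3/2 * x (S m) - 1/2 * x m + y (S m) + dt * sum_range 2 (S m) z
    <= 3/2 * x 1%nat - 1/2 * x 0%nat + y 1%nat + dt * sum_range 2 (S m) b
       + dt * sum_range 2 (S m) T).
  { induction m as [|m IH].
    - rewrite !sr_1. lra.
    - rewrite !sr_S. specialize (Hrec (S (S m)) ltac:(lia)).
      replace (S (S m) - 1)%nat with (S m) in Hrec by lia.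
      replace (S (S m) - 2)%nat with m in Hrec by lia.
      set (D := 3 / 2 * x (S (S m)) - 2 * x (S m) + 1 / 2 * x m + y (S (S m)) - y (S m)) in Hrec.
      assert (H2 : D + dt * z (S (S m)) <= dt * (a0 * x (S (S m)) + a1 * x (S m) + a2 * x m + b (S (S m)))).
      { apply Rmult_le_compat_l with (r := dt) in Hrec; [|lra].
        replace (dt * (/ dt * D + z (S (S m)))) with (D + dt * z (S (S m))) in Hrec by (field; lra).
        exact Hrec. }
      assert (HT : T (S (S m)) = a0 * x (S (S m)) + a1 * x (S m) + a2 * x m).
      { unfold T. replace (S (S m) - 1)%nat with (S m) by lia.
        replace (S (S m) - 2)%nat with m by lia. reflexivity. }
      rewrite HT. unfold D in H2. nra. }
  set (ast := a0 + a1 + a2).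
  assert (HTb : forall m : nat, sum_range 2 (S m) T + a2 * x m <= a0 * x (S m) + ast * psum x (S m)).
  { induction m as [|m IH].
    - rewrite sr_1. simpl. unfold ast. pose proof (Hx 0%nat). pose proof (Hx 1%nat). nra.
    - rewrite sr_S.
      assert (HT : T (S (S m)) = a0 * x (S (S m)) + a1 * x (S m) + a2 * x m).
      { unfold T. replace (S (S m) - 1)%nat with (S m) by lia.
        replace (S (S m) - 2)%nat with m by lia. reflexivity. }
      rewrite HT. change (psum x (S (S m))) with (psum x (S m) + x (S m)).
      unfold ast in *. pose proof (Hx m). nra. }
  set (u := dt * a0). set (v := dt * ast). set (r := exp (2 * v)).
  assert (Hu0 : 0 <= u) by (unfold u; nra).
  assert (Huv : u <= v) by (unfold u, v, ast; nra).
  assert (Hu34 : u <= 3/4).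
  { unfold u. destruct (Req_dec a0 0) as [E|E]. rewrite E. lra.
    destruct Hdt0 as [E'|E']. contradiction.
    assert (0 < a0) by lra.
    apply Rmult_le_compat_r with (r := a0) in E'; [|lra].
    replace (3 / (4 * a0) * a0) with (3/4) in E' by (field; lra). lra. }
  assert (Hv0 : 0 <= v) by (unfold v, ast; nra).
  assert (HrL : Lf v <= r).
  { unfold r, Lf. replace (2 * v) with (v/2 + v/2 + v/2 + v/2) by field.
    rewrite !exp_plus. pose proof (exp_ineq1_le (v/2)).
    replace (exp (v/2) * exp (v/2) * exp (v/2) * exp (v/2)) with (exp (v/2) ^ 4) by (simpl; ring).
    apply pow_incr. lra. }
  assert (Hr1 : 1 <= r) by (pose proof (Lf_ge v Hv0); lra).
  set (C := x 0%nat + 3 / 2 * x 1%nat + y 1%nat + dt * sum_range 2 N b).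
  assert (HBN : forall k, (k <= N)%nat -> sum_range 2 k b <= sum_range 2 N b)
    by (intros; apply sr_mono; auto).
  assert (HZ : forall k, 0 <= sum_range 2 k z) by (intros; apply sr_nonneg; auto).
  assert (HB0 : forall k, 0 <= sum_range 2 k b) by (intros; apply sr_nonneg; auto).
  assert (Hy1 := Hy 1%nat ltac:(lia)).
  assert (HC0 : x 0%nat + 3/2 * x 1%nat <= C).
  { unfold C. pose proof (HB0 N). nra. }
  assert (Hx0 := Hx 0%nat). assert (Hx1 := Hx 1%nat).
  assert (HW : forall m : nat, (1 <= m)%nat -> (S m <= N)%nat ->
     (forall i, (i < S m)%nat -> x i <= (r ^ i + 1) * C) ->
     x (S m) + 2/3 * y (S m) + 2/3 * dt * sum_range 2 (S m) z <= (r ^ (S m) + 1) * C).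
  { intros m Hm HmN IH.
    pose proof (Hsum m) as S1. pose proof (HTb m) as T1.
    set (W := x (S m) + 2/3 * y (S m) + 2/3 * dt * sum_range 2 (S m) z).
    assert (HyS := Hy (S m) ltac:(lia)). pose proof (HZ (S m)).
    assert (HxW : x (S m) <= W) by (unfold W; nra).
    set (G := psum (fun i => r ^ i) (S m)).
    assert (HP : psum x (S m) <= (G + INR (S m)) * C).
    { unfold G. rewrite <- psum_HC. apply psum_le. exact IH. }
    assert (HGk : INR (S m) <= G) by (apply geom_ge; lra).
    assert (HC : 0 <= C) by lra.
    assert (HP2 : psum x (S m) <= 2 * G * C) by nra.
    assert (HK : 3/2 * x 1%nat - 1/2 * x 0%nat + y 1%nat + dt * sum_range 2 (S m) b <= C).
    { unfold C. pose proof (HBN (S m) HmN). nra. }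
    assert (HdtT : dt * sum_range 2 (S m) T <= u * x (S m) + v * psum x (S m)).
    { unfold u, v. pose proof (Hx m). assert (0 <= a2 * x m) by nra. nra. }
    assert (Hxm : x m <= (r ^ m + 1) * C) by (apply IH; lia).
    assert (Hmain : (3/2 - u) * W <= ((r^m + 1)/2 + 1 + 2 * v * G) * C).
    { assert (E : 3/2 * W = 3/2 * x (S m) + y (S m) + dt * sum_range 2 (S m) z) by (unfold W; field).
      assert (u * x (S m) <= u * W) by nra.
      assert (v * psum x (S m) <= v * (2 * G * C)) by nra.
      nra. }
    assert (HX : r <= r ^ m).
    { replace r with (r ^ 1) at 1 by (simpl; ring). apply Rle_pow; lia || lra. }
    assert (HG0 : 0 <= G) by (pose proof (pos_INR (S m)); lra).
    assert (Hgeo : (r - 1) * G = r * r ^ m - 1).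
    { unfold G. rewrite geom. simpl. ring. }
    pose proof (key u v r (r ^ m) G Hu0 Huv Hu34 HrL HX HG0 Hgeo) as Hk.
    assert (Hk2 : ((r^m + 1)/2 + 1 + 2 * v * G) * C <= (3/2 - u) * ((r * r^m + 1) * C)).
    { replace ((3/2 - u) * ((r * r^m + 1) * C)) with (((3/2 - u) * (r * r^m + 1)) * C) by ring.
      apply Rmult_le_compat_r; lra. }
    change (r ^ S m) with (r * r ^ m).
    fold W.
    assert (Hpos : 0 < 3/2 - u) by lra.
    apply Rmult_le_reg_l with (r := 3/2 - u); [exact Hpos|]. lra. }
  assert (Hall : forall k, (forall i, (i < k)%nat -> (i <= N)%nat -> x i <= (r ^ i + 1) * C)).
  { induction k as [|k IHk]; intros i Hi HiN.
    - lia.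
    - destruct (Nat.eq_dec i k) as [->|Hne]; [|apply IHk; lia].
      destruct k as [|[|m]].
      + simpl. lra.
      + simpl. assert (0 <= r * 1) by lra. nra.
      + pose proof (HW (S m) ltac:(lia) HiN) as HH.
        assert (HH2 : forall i0, (i0 < S (S m))%nat -> x i0 <= (r ^ i0 + 1) * C)
          by (intros; apply IHk; lia).
        specialize (HH HH2).
        assert (Hys := Hy (S (S m)) ltac:(lia)). pose proof (HZ (S (S m))).
        assert (0 <= 2/3 * dt * sum_range 2 (S (S m)) z) by nra. lra. }
  destruct N as [|m]; [lia|].
  assert (Hexp : exp (2 * ast * INR (S m) * dt) = r ^ S m).
  { unfold r, v, ast. rewrite <- exp_INR. f_equal. ring. }
  rewrite Hexp. fold C.
  apply HW; [lia|lia|]. intros i Hi. apply (Hall (S m)); lia.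
Qed.
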